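(* Let $X$ be a Tychonoff space and let $x_0,y_0\in X$ be points that are not $P$-points of $X$. Then there exist a Tychonoff space $Y$ and an $\mathbb R$-quotient map $f\colon X\to Y$ such that $Y$ is a subset of $\mathbb R$ endowed with a topology finer than the one induced by the Euclidean metric, and $f(x_0)$ and $f(y_0)$ are not $P$-points of $Y$. Moreover, if $x_0\ne y_0$, then $f$ can be chosen so that $f(x_0)<f(y_0)$.
   Context: A point $x$ of a space is a $P$-point if every $G_\delta$-set containing $x$ is a neighborhood of $x$. A continuous surjection $p\colon X\to Y$ between topological spaces is $\mathbb R$-quotient if for every function $\varphi\colon Y\to\mathbb R$, $\varphi$ is continuous if and only if $\varphi\circ p$ is continuous; equivalently, the topology of $Y$ is the finest completely regular topology making $p$ continuous. *)

(* Defs.v *)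
From HB Require Import structures.
From mathcomp Require Import all_boot all_order all_algebra.
From mathcomp Require Import all_classical all_reals all_analysis.
From mathcomp Require Import borel_hierarchy urysohn.
Import numFieldNormedType.Exports.
Set Implicit Arguments. Unset Strict Implicit. Unset Printing Implicit Defensive.
Import Order.TTheory GRing.Theory Num.Theory.
Local Open Scope classical_set_scope.
Local Open Scope ring_scope.

Definition tychonoff_space (T : topologicalType) : Prop :=
  completely_regular_space T /\ hausdorff_space T.

Definition P_point (T : topologicalType) (x : T) : Prop :=
  forall G : set T, Gdelta G -> G x -> nbhs x G.

Definition R_quotient (R : realType) (X Y : topologicalType) (p : X -> Y) : Prop :=
  continuous p /\ (forall y : Y, exists x : X, p x = y) /\
  forall phi : Y -> R, continuous phi <-> continuous (phi \o p).

(* Main.v *)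
Require Import Defs.
From HB Require Import structures.
From mathcomp Require Import all_boot all_order all_algebra.
From mathcomp Require Import all_classical all_reals all_analysis.
From mathcomp Require Import borel_hierarchy urysohn.
Import numFieldNormedType.Exports.
Import Order.TTheory GRing.Theory Num.Theory.
Local Open Scope classical_set_scope.
Local Open Scope ring_scope.
From mathcomp Require Import ring lra.
Lemma small_inv (R : realType) (e : R) : 0 < e -> exists N : nat, N.+1%:R^-1 < e.
Proof.
move=> e0; exists (Num.trunc e^-1).
have h := truncnS_gt e^-1.
by rewrite -[e in _ < e]invrK ltf_pV2 ?posrE ?invr_gt0.
Qed.

Lemma min_lip (R : realType) (a b c e : R) : 0 <= e -> a <= b + e -> Num.min a c <= Num.min b c + e.
Proof.
move=> e0 h; rewrite /Num.min; case: ltP => h1; case: ltP => h2; lra.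
Qed.

Lemma near_fin (X : topologicalType) (P : nat -> X -> Prop) (z : X) N :
  (forall k, \forall y \near z, P k y) -> \forall y \near z, forall k, (k < N)%N -> P k y.
Proof.
move=> H; elim: N => [|N IH]; first by apply: nearW => y k; rewrite ltn0.
apply: filterS2 IH (H N) => y h1 h2 k; rewrite ltnS leq_eqVlt => /orP [/eqP ->|] //.
exact: h1.
Qed.

Lemma nonP_fun (R : realType) (X : topologicalType) (x : X) :
  completely_regular_space X -> ~ P_point x ->
  exists g : X -> R, [/\ continuous g, (forall z, 0 <= g z <= 1), g x = 0 &
     ~ nbhs x [set z | g z = 0]].
Proof.
move=> crX nP.
have [G [[U Uo GU] Gx nG]] : exists G : set X, [/\ Gdelta G, G x & ~ nbhs x G].
  apply: contrapT => hn; apply: nP => G GG Gx; apply: contrapT => nG.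
  by apply: hn; exists G.
have Ux : forall n, U n x by move=> n; move: Gx; rewrite GU; apply.
have /choice [f hf] : forall n, exists f : X -> R, [/\ continuous f, range f `<=` `[0, 1],
   f @` [set x] `<=` [set 0] & f @` (~` U n) `<=` [set 1]].
  move=> n; apply/uniform_separatorP; apply: crX; first exact: open_closedC.
  by move=> /(_ (Ux n)).
have fc : forall k, continuous (f k) by move=> k; case: (hf k).
have fr : forall k, range (f k) `<=` `[0, 1] by move=> k; case: (hf k).
have fx0 : forall k, f k @` [set x] `<=` [set 0] by move=> k; case: (hf k).
have fU : forall k, f k @` (~` U k) `<=` [set 1] by move=> k; case: (hf k).
have f01 : forall k z, 0 <= f k z <= 1.
  move=> k z; have := fr k (f k z) (ex_intro2 _ _ z I erefl).
  by rewrite /= in_itv /=.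
have fx : forall k, f k x = 0 by move=> k; apply: fx0; exists x.
pose t k z := Num.min (f k z) (k.+1%:R^-1).
have t0 : forall k z, 0 <= t k z.
  by move=> k z; rewrite /t le_min invr_ge0 ler0n; case/andP: (f01 k z) => -> _.
have tk : forall k z, t k z <= k.+1%:R^-1 by move=> k z; rewrite /t ge_min lexx orbT.
have t1 : forall k z, t k z <= 1 by move=> k z; rewrite /t ge_min; case/andP: (f01 k z) => _ ->.
pose g z := sup (range (fun k => t k z)).
have ne : forall z, range (fun k => t k z) !=set0 by move=> z; exists (t 0%N z); exists 0%N.
have hub : forall z, has_ubound (range (fun k => t k z)).
  by move=> z; exists 1 => _ [k _ <-]; exact: t1.
have tg : forall k z, t k z <= g z.
  by move=> k z; apply: ub_le_sup (hub z) _ _; exists k.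
have gle : forall z c, (forall k, t k z <= c) -> g z <= c.
  by move=> z c h; apply: ge_sup (ne z) _ => _ [k _ <-]; exact: h.
have g0 : forall z, 0 <= g z by move=> z; exact: le_trans (t0 0%N z) (tg 0%N z).
exists g; split.
- move=> z; apply/cvgrPdist_le => e e0.
  have [N hN] := @small_inv R e e0.
  have : \forall y \near z, forall k, (k < N)%N -> `|f k z - f k y| <= e.
    apply: near_fin => k.
    by have /cvgrPdist_le := fc k z; apply.
  apply: filterS => y hy.
  have key : forall a b, (forall k, (k < N)%N -> `|f k a - f k b| <= e) -> g b <= g a + e.
    move=> a b hab; apply: gle => k.
    case: (ltnP k N) => kN.
      have := hab k kN; rewrite ler_distlC => /andP [_ h1].
      apply: le_trans (lerD (tg k a) (lexx e)).
      by apply: min_lip; [exact: ltW|].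
    apply: le_trans (tk k b) _.
    have : k.+1%:R^-1 <= N.+1%:R^-1 :> R.
      by rewrite lef_pV2 ?posrE ?ltr0Sn // ler_nat ltnS.
    move=> h; apply: le_trans h _; apply: le_trans (ltW hN) _; by rewrite lerDr g0.
  rewrite ler_distlC; apply/andP; split.
    have h2 : g z <= g y + e.
      by apply: key => k kN; rewrite distrC; exact: hy.
    lra.
  have := key z y hy; lra.
- move=> z; rewrite g0 /=.
  by apply: gle => k; exact: t1.
- apply/eqP; rewrite eq_le g0 andbT; apply: gle => k.
  by rewrite /t fx ge_min lexx.
- move=> nz; apply: nG; apply: filterS nz => z /= gz.
  rewrite GU => n _.
  apply: contrapT => nU.
  have f1 : f n z = 1 by apply: (fU n); exists z.
  by have := tg n z; rewrite gz /t ge_min f1 ler10 /= invr_le0 lern0.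
Qed.
Section Yconstr.
Context (R : realType) (X : topologicalType) (F : X -> R) (Fc : continuous F).

Definition C := {r : R | r \in range F}.
Definition fC (x : X) : C := exist _ (F x) (mem_set (ex_intro2 _ _ x I erefl)).
Definition Idx := {phi : C -> R | continuous (phi \o fC)}.
Definition Y : uniformType := @sup_topology C Idx
  (fun p => Uniform.class (initial_topology (projT1 p))).

Lemma phi_cont (p : Idx) : continuous (projT1 p : Y -> R).
Proof.
move=> y.
have := @cvg_sup C Idx (fun p => Uniform.class (initial_topology (projT1 p))) (nbhs (y : Y)) y _.
move=> /(_ (@nbhs_filter Y y)) [+ _] => /(_ (cvg_id))/(_ p) h.
apply: (cvg_trans _ (@initial_continuous C R (projT1 p) y)). exact: cvg_app h.
Qed.


Lemma fC_cont : continuous (fC : X -> Y).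
Proof.
move=> x.
apply: (proj2 (@cvg_sup C Idx (fun p => Uniform.class (initial_topology (projT1 p))) (fC @ nbhs x) (fC x) _)) => p.
exact: (@continuous_comp_initial C X R (projT1 p) fC (projT2 p) x).
Qed.

Definition valY (y : Y) : R := sval y.

Lemma valY_cont : continuous valY.
Proof.
have c : continuous ((sval : C -> R) \o fC) by [].
exact: (phi_cont (exist _ sval c)).
Qed.

Lemma fC_surj (y : Y) : exists x, fC x = y.
Proof.
case: y => r rF; have := set_mem rF; case=> x _ xr; exists x.
by apply: val_inj.
Qed.

Lemma Y_quot : R_quotient R (fC : X -> Y).
Proof.
split; first exact: fC_cont.
split; first exact: fC_surj.
move=> phi; split.
  by move=> cphi x; apply: continuous_comp; [exact: fC_cont | exact: cphi].
by move=> c; exact: (phi_cont (exist _ phi c)).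
Qed.

Lemma Y_haus : hausdorff_space Y.
Proof.
move=> p q cl; apply: val_inj; apply: Rhausdorff => A B nA nB.
have := cl _ _ (@valY_cont p _ nA) (@valY_cont q _ nB).
by case=> z [Az Bz]; exists (valY z).
Qed.

Lemma Y_tych : tychonoff_space Y.
Proof. by split; [exact: (@uniform_completely_regular R Y) | exact: Y_haus]. Qed.

Lemma notP (x : X) : ~ nbhs x (F @^-1` [set F x]) -> ~ P_point (fC x : Y).
Proof.
move=> nn P; apply: nn.
have G : Gdelta (valY @^-1` [set F x]).
  exists (fun n => valY @^-1` ball (F x) n.+1%:R^-1).
    move=> n; apply: (continuousP _).1; first exact: valY_cont.
    exact: ball_open.
  apply/seteqP; split => y /=.
    move=> e n _; rewrite /preimage /= e; exact: ballxx.
  move=> h; apply/eqP; apply: contrapT => /negP ne.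
  have : 0 < `|F x - valY y| by rewrite normr_gt0 subr_eq0 eq_sym.
  case/small_inv => N hN.
  have := h N I; rewrite /ball /=.
  by move/lt_trans => /(_ _ hN); rewrite ltxx.
have := P _ G erefl.
by move/fC_cont.
Qed.

End Yconstr.

Theorem proposition2 (R : realType) (X : topologicalType) (x0 y0 : X) :
  tychonoff_space X -> ~ P_point x0 -> ~ P_point y0 ->
  exists (Y : topologicalType) (i : Y -> R) (f : X -> Y),
    [/\ tychonoff_space Y, R_quotient R f, injective i & continuous i] /\
    [/\ ~ P_point (f x0), ~ P_point (f y0)
       & x0 <> y0 -> i (f x0) < i (f y0)].
Proof.
move=> [crX hX] nPx nPy.
have [g [gc g01 gx ng]] := @nonP_fun R X x0 crX nPx.
have [h [hc h01 hy nh]] := @nonP_fun R X y0 crX nPy.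
have [u [uc u01 ux uy]] : exists u : X -> R, [/\ continuous u, (forall z, 0 <= u z <= 1),
    u x0 = 0 & x0 <> y0 -> u y0 = 1].
  case: (pselect (x0 = y0)) => [e|ne].
    exists (fun=> 0); split => //; first by move=> z; exact: cvg_cst.
    by move=> z; rewrite lexx ler01.
  have cl : closed [set y0] by apply: accessible_closed_set1; exact: hausdorff_accessible.
  have /(@uniform_separatorP _ R) [u [uc ur u0 u1]] := crX x0 _ cl (fun e => ne e).
  exists u; split => //.
  - by move=> z; have := ur (u z) (ex_intro2 _ _ z I erefl); rewrite /= in_itv.
  - by apply: u0; exists x0.
  - by move=> _; apply: u1; exists y0.
pose F z := (1 - (1 - g z) * (1 - u z)) - (1 - (1 - h z) * u z).
have Fc : continuous F.
  move=> z; apply: cvgB; apply: cvgB; try exact: cvg_cst; apply: cvgM;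
    try (apply: cvgB; [exact: cvg_cst|]); by [apply: gc|apply: uc|apply: hc].
have Fx0 : F x0 = -1 by rewrite /F gx ux; ring.
have fib0 : F @^-1` [set F x0] `<=` [set z | g z = 0].
  move=> z /=; rewrite Fx0 /F => e.
  have := g01 z; have := h01 z; have := u01 z => /andP[? ?] /andP[? ?] /andP[? ?].
  apply/eqP; rewrite eq_le; apply/andP; split => //; nra.
have nx : ~ nbhs x0 (F @^-1` [set F x0]) by move=> nb; apply: ng; exact: filterS nb.
have ny : ~ nbhs y0 (F @^-1` [set F y0]).
  case: (pselect (x0 = y0)) => [<-//|ne].
  have Fy0 : F y0 = 1 by rewrite /F hy uy //; ring.
  move=> nb; apply: nh; apply: filterS nb => z /=; rewrite Fy0 /F => e.
  have := g01 z; have := h01 z; have := u01 z => /andP[? ?] /andP[? ?] /andP[? ?].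
  apply/eqP; rewrite eq_le; apply/andP; split => //; nra.
exists (@Y R X F), (@valY R X F), (@fC R X F); split; split.
- exact: Y_tych.
- exact: Y_quot.
- by move=> a b; apply: val_inj.
- exact: valY_cont.
- exact: notP.
- exact: notP.
- move=> ne; rewrite /valY /= Fx0 /F hy uy //; lra.
Qed.
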